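(* Let $\mathbf H$ be an $N\times N$ generalized Wigner matrix with parameters $\varepsilon,c_1,C_1,C_2$, and let $\mathbf L$ be an $\mathbf H$-distributed $AB$ label. Then there exist constants $c,C>0$, depending only on $C_2$ and $\varepsilon$, such that the probability that $\mathbf L$ is inadmissible is less than $CN^{-c\log\log N}$.
   Context: A real symmetric $N\times N$ random matrix $\mathbf H=\{h_{ij}\}$ is a generalized Wigner matrix with parameters $\varepsilon\in(0,1)$, $0<c_1<1<C_1$, $C_2>1$ if the entries $\{h_{ij}\}_{1\le i\le j\le N}$ are centered and mutually independent, $h_{ij}=h_{ji}$, and with $s_{ij}=\mathbb E[|h_{ij}|^2]$, $t_i=\sum_j s_{ij}-1$: (A1) $c_1<Ns_{ij}<C_1$; (A2) $|t_i|<C_1N^{-\varepsilon}$; (A3) $\mathbb E[|h_{ij}\sqrt N|^{2+\varepsilon}]<C_2$. Let $p_{ij}=\mathbb P[|h_{ij}|<N^{-\varepsilon/10}]$. An $AB$ label is a symmetric $N\times N$ array $\mathbf L=\{L_{ij}\}$ with entries in $\{A,B\}$. $\mathbf L$ is $\mathbf H$-distributed if $\{L_{ij}\}_{i\le j}$ are mutually independent with $\mathbb P[L_{ij}=A]=p_{ij}$ and $\mathbb P[L_{ij}=B]=1-p_{ij}$. Indices $i,j$ are linked if $L_{ij}=B$; they are connected if there is a sequence $i=i_1,\dots,i_r=j$ with $i_m$ linked to $i_{m+1}$ for each $m$. An index $i$ is deviant if there exists $j\in[1,N]$ linked to $i$. $\mathbf L$ is inadmissible if either there are at least $N^{1-\varepsilon/20}$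 deviant indices, or there exist $r=\lceil\log\log N\rceil$ distinct indices $j_1,\dots,j_r$ that are pairwise connected; otherwise it is admissible. *)

(* Defs.v *)
From HB Require Import structures.
From mathcomp Require Import all_boot all_order all_algebra.
From mathcomp Require Import all_classical all_reals all_analysis.
Set Implicit Arguments. Unset Strict Implicit. Unset Printing Implicit Defensive.
Import Order.TTheory GRing.Theory Num.Theory.
Local Open Scope classical_set_scope.
Local Open Scope ring_scope.

Definition mutually_independent {d} {T : measurableType d} {R : realType}
  (P : probability T R) {I : finType} (S : {set I}) (X : I -> T -> R) : Prop :=
  forall J : {set I}, J \subset S ->
  forall B : I -> set R, (forall i, measurable (B i)) ->
  P (\bigcap_(i in [set k | k \in J]) (X i @^-1` B i)) =
  (\prod_(i in J) P (X i @^-1` B i))%E.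

Definition upper_pairs (N : nat) : {set 'I_N * 'I_N} :=
  [set ij : 'I_N * 'I_N | (ij.1 <= ij.2)%N].

Definition s_entry {d} {T : measurableType d} {R : realType}
  (P : probability T R) (X : T -> R) : R :=
  fine ('E_P[fun w => (X w ^+ 2)%R])%E.

Definition generalized_Wigner {d} {T : measurableType d} {R : realType}
  (P : probability T R) (N : nat) (h : 'I_N -> 'I_N -> {RV P >-> R})
  (eps c1 C1 C2 : R) : Prop :=
  (forall i j, h i j = h j i :> (T -> R)) /\
      mutually_independent P (upper_pairs N) (fun ij => (h ij.1 ij.2 : T -> R)) /\
      (forall i j, ('E_P[h i j] = 0)%E) /\
      (forall i j, c1 < N%:R * s_entry P (h i j) < C1) /\
      (forall i : 'I_N,
                 `|\sum_(j < N) s_entry P (h i j) - 1| < C1 * N%:R `^ (- eps)) /\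
      (forall i j,
        ('E_P[fun w => (`|h i j w * Num.sqrt N%:R| `^ (2 + eps))%R] < C2%:E)%E).

Arguments generalized_Wigner {d T R} P {N} h eps c1 C1 C2.

Definition p_entry {d} {T : measurableType d} {R : realType}
  (P : probability T R) (N : nat) (eps : R) (X : T -> R) : R :=
  fine (P [set w | `|X w| < N%:R `^ (- (eps / 10))]).

Inductive AB := lA | lB.
Definition bool_of_AB (x : AB) : bool := if x is lB then true else false.
Definition AB_of_bool (b : bool) : AB := if b then lB else lA.
Lemma bool_of_ABK : cancel bool_of_AB AB_of_bool. Proof. by case. Qed.
HB.instance Definition _ := Finite.copy AB (can_type bool_of_ABK).

Definition label (N : nat) := {ffun 'I_N * 'I_N -> AB}.

Definition symmetric_label N (L : label N) : bool :=
  [forall i : 'I_N, forall j : 'I_N, L (i, j) == L (j, i)].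

Definition linked N (L : label N) : rel 'I_N := fun i j => L (i, j) == lB.

Definition connected_idx N (L : label N) (i j : 'I_N) : bool :=
  connect (linked L) i j.

Definition deviant N (L : label N) : {set 'I_N} :=
  [set i | [exists j, linked L i j]].

Definition r_of {R : realType} (N : nat) : nat :=
  absz (Num.max 0%Z (Num.ceil (ln (ln (N%:R : R))))).

Definition inadmissible {R : realType} N (eps : R) (L : label N) : Prop :=
  (N%:R `^ (1 - eps / 20) <= (#|deviant L|)%:R)
  \/ exists js : seq 'I_N,
       [/\ size js = r_of (R := R) N, uniq js &
           forall a b, a \in js -> b \in js -> connected_idx L a b].

(* Probability that an H-distributed label (independent entries L_ij,
   i <= j, with P[L_ij = A] = p_ij) satisfies the event E. *)
Definition label_prob {R : realType} N (p : 'I_N -> 'I_N -> R)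
  (E : label N -> Prop) : R :=
  \sum_(L : label N | symmetric_label L && `[< E L >])
     \prod_(ij in upper_pairs N)
        (if L ij == lA then p ij.1 ij.2 else 1 - p ij.1 ij.2).

(* Main.v *)
Require Import Defs.
From HB Require Import structures.
From mathcomp Require Import all_boot all_order all_algebra.
From mathcomp Require Import all_classical all_reals all_analysis.
From mathcomp Require Import ring lra measurable_realfun.
Import Order.TTheory GRing.Theory Num.Theory.
Local Open Scope ring_scope.

Section Comb.
Variable R : realType.

Lemma sum_AB (f : AB -> R) : \sum_(a : AB) f a = f lA + f lB.
Proof.
by rewrite (bigD1 lA) //= (bigD1 lB) //= big_pred0 ?addr0 // => -[].
Qed.

Definition phiL N (L : label N) : label N :=
  [ffun ij => if ij \in upper_pairs N then L ij else lA].

Arguments phiL {N}.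
Lemma phiL_inj N : {in [pred L : label N | symmetric_label L] &, injective (@phiL N)}.
Proof.
move=> L1 L2; rewrite !inE => /forallP s1 /forallP s2 e.
apply/ffunP => -[i j].
have e' : forall ij, ij \in upper_pairs N -> L1 ij = L2 ij.
  by move=> ij hij; move/ffunP: e => /(_ ij); rewrite !ffunE hij.
have [hij|hij] := boolP ((i, j) \in upper_pairs N); first exact: e'.
have hji : (j, i) \in upper_pairs N.
  move: hij; rewrite !inE /= -ltnNge => /ltnW //.
move/forallP: (s1 i) => /(_ j) /eqP ->.
move/forallP: (s2 i) => /(_ j) /eqP ->.
exact: e'.
Qed.

Lemma factor_le N (G : 'I_N * 'I_N -> AB -> R) :
  (forall ij a, 0 <= G ij a) ->
  \sum_(L : label N | symmetric_label L) \prod_(ij in upper_pairs N) G ij (L ij)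
  <= \prod_(ij in upper_pairs N) (G ij lA + G ij lB).
Proof.
move=> G0.
pose F ij a := if ij \in upper_pairs N then G ij a else (if a == lA then 1 else 0 : R).
have F0 ij a : 0 <= F ij a by rewrite /F; case: ifP => // _; case: ifP.
have -> : \prod_(ij in upper_pairs N) (G ij lA + G ij lB) =
          \prod_(ij : 'I_N * 'I_N) \sum_(a : AB) F ij a.
  rewrite [RHS](bigID (mem (upper_pairs N))) /= [X in _ * X]big1 ?mulr1.
    by apply: eq_bigr => ij hij; rewrite sum_AB /F hij.
  by move=> ij hij; rewrite sum_AB /F (negbTE hij) /= addr0.
rewrite bigA_distr_bigA /=.
have -> : \sum_(L : label N | symmetric_label L) \prod_(ij in upper_pairs N) G ij (L ij)
   = \sum_(L in [set L : label N | symmetric_label L]) \prod_ij F ij (phiL L ij).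
  apply: eq_big => [L|L _]; first by rewrite inE.
  rewrite [RHS](bigID (mem (upper_pairs N))) /= [X in _ * X]big1 ?mulr1.
    by apply: eq_bigr => ij hij; rewrite /F /phiL ffunE hij.
  by move=> ij hij; rewrite /F /phiL ffunE (negbTE hij).
rewrite -(big_imset (fun f : label N => \prod_ij F ij (f ij))) /=; last first.
  by move=> L1 L2; rewrite !inE => h1 h2; apply: phiL_inj.
rewrite [X in _ <= X](bigID (mem (phiL @: [set L : label N | symmetric_label L]))) /=.
by rewrite lerDl sumr_ge0 // => f _; rewrite prodr_ge0.
Qed.

End Comb.


Section Weights.
Variable R : realType.
Variable N : nat.
Variable p : 'I_N -> 'I_N -> R.
Hypothesis hp : forall i j, 0 <= p i j <= 1.

Definition wab (ij : 'I_N * 'I_N) (a : AB) : R :=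
  if a == lA then p ij.1 ij.2 else 1 - p ij.1 ij.2.

Lemma wab_ge0 ij a : 0 <= wab ij a.
Proof. by rewrite /wab; case: ifP => _; have /andP[] := hp ij.1 ij.2; rewrite // subr_ge0. Qed.

Lemma wab_sum ij : wab ij lA + wab ij lB = 1.
Proof. by rewrite /wab /= addrC subrK. Qed.

Definition wt (L : label N) := \prod_(ij in upper_pairs N) wab ij (L ij).

Lemma wt_ge0 L : 0 <= wt L.
Proof. by rewrite /wt prodr_ge0 // => ij _; exact: wab_ge0. Qed.

Lemma label_probE E :
  label_prob p E = \sum_(L | symmetric_label L) (if `[< E L >] then wt L else 0).
Proof. by rewrite /label_prob big_mkcondr. Qed.

Lemma label_prob_le1 E : label_prob p E <= 1.
Proof.
rewrite label_probE.
apply: (@le_trans _ _ (\sum_(L | symmetric_label L) wt L)).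
  by apply: ler_sum => L _; case: ifP => _; rewrite ?wt_ge0.
apply: le_trans (@factor_le R N wab wab_ge0) _.
by rewrite big1 // => ij _; rewrite wab_sum.
Qed.

Lemma union_le (E : label N -> Prop) (f : label N -> R) :
  (forall L, 0 <= f L) -> (forall L, symmetric_label L -> E L -> 1 <= f L) ->
  label_prob p E <= \sum_(L | symmetric_label L) wt L * f L.
Proof.
move=> f0 fE; rewrite label_probE; apply: ler_sum => L sL.
case: asboolP => [EL|_]; last by rewrite mulr_ge0 ?wt_ge0.
by rewrite -{1}[wt L]mulr1 ler_wpM2l ?wt_ge0 ?fE.
Qed.

Lemma prod_sub (S : {set 'I_N * 'I_N}) (f : 'I_N * 'I_N -> R) :
  S \subset upper_pairs N ->
  \prod_(ij in S) f ij = \prod_(ij in upper_pairs N) (if ij \in S then f ij else 1).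
Proof.
move=> /fintype.subsetP sS; rewrite big_mkcond [RHS]big_mkcond; apply: eq_bigr => ij _.
by case: (boolP (ij \in S)) => hS; [rewrite (sS _ hS) | case: ifP].
Qed.

Lemma pattern_le (S : {set 'I_N * 'I_N}) : S \subset upper_pairs N ->
  \sum_(L | symmetric_label L) wt L * \prod_(ij in S) (if L ij == lB then 1 else 0)
  <= \prod_(ij in S) (1 - p ij.1 ij.2).
Proof.
move=> sS.
pose G ij a := wab ij a * (if ij \in S then (if a == lB then 1 else 0) else 1 : R).
have -> : \sum_(L | symmetric_label L) wt L * \prod_(ij in S) (if L ij == lB then 1 else 0)
   = \sum_(L | symmetric_label L) \prod_(ij in upper_pairs N) G ij (L ij).
  apply: eq_bigr => L _; rewrite prod_sub // /wt -big_split /=.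
  by apply: eq_bigr => ij _; rewrite /G.
apply: le_trans (@factor_le R N G _) _.
  by move=> ij a; rewrite /G mulr_ge0 ?wab_ge0 //; case: ifP => //; case: ifP.
rewrite [X in _ <= X](prod_sub _ _ sS) le_eqVlt; apply/orP; left; apply/eqP.
apply: eq_bigr => ij _; rewrite /G /=; case: ifP => _.
  by rewrite mulr0 add0r mulr1 /wab.
by rewrite !mulr1 wab_sum.
Qed.

End Weights.
Arguments wab {R N} p ij a.
Arguments wt {R N} p L.
Arguments wab_ge0 {R N p} hp ij a.
Arguments wt_ge0 {R N p} hp L.
Arguments prod_sub {R N} S f.
Arguments pattern_le {R N p} hp S.
Arguments union_le {R N p} hp E f.
Arguments label_prob_le1 {R N p} hp E.
Arguments factor_le {R N} G.


Section PartA.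
Variable R : realType.
Variable N : nat.
Variable p : 'I_N -> 'I_N -> R.
Hypothesis hp : forall i j, 0 <= p i j <= 1.

Definition Bset (L : label N) := [set ij in upper_pairs N | L ij == lB].

Lemma card_upper : (#|upper_pairs N| <= N ^ 2)%N.
Proof.
by apply: leq_trans (max_card _) _; rewrite card_prod card_ord.
Qed.

Lemma partA (Q D : R) : 0 <= Q -> (forall i j, 1 - p i j <= Q) ->
  \sum_(L | symmetric_label L) wt p L * expR ((#|Bset L|)%:R - D)
  <= expR ((N ^ 2)%:R * (Q * (expR 1 - 1)) - D).
Proof.
move=> Q0 hQ.
have e1 : 0 <= expR 1 - 1 :> R.
  by rewrite subr_ge0; apply: le_trans (expR_ge1Dx _); rewrite lerDl.
pose G ij a := wab p ij a * (if a == lB then expR 1 else 1 : R).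
have G0 ij a : 0 <= G ij a.
  by rewrite /G mulr_ge0 ?(wab_ge0 hp) //; case: ifP => _; rewrite ?expR_ge0.
have -> : \sum_(L | symmetric_label L) wt p L * expR ((#|Bset L|)%:R - D)
   = expR (- D) * \sum_(L | symmetric_label L) \prod_(ij in upper_pairs N) G ij (L ij).
  rewrite mulr_sumr; apply: eq_bigr => L _.
  rewrite expRD mulrA mulrC; congr (_ * _).
  rewrite -[X in expR X]mulr1 expRM_natl -prodr_const prod_sub; last first.
    by apply/fintype.subsetP => ij; rewrite inE => /andP[].
  rewrite /wt -big_split /=; apply: eq_bigr => ij hij.
  by rewrite /G inE hij /=; case: (L ij).
rewrite expRD mulrC ler_wpM2r ?expR_ge0 //.
apply: le_trans (factor_le G G0) _.
apply: (@le_trans _ _ (\prod_(ij in upper_pairs N) expR (Q * (expR 1 - 1)))).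
  apply: ler_prod => ij _; rewrite addr_ge0 ?G0 //=.
  apply: le_trans (expR_ge1Dx _).
  have h := ler_wpM2r e1 (hQ ij.1 ij.2).
  rewrite /G /wab /= mulr1.
  move: h; set e := expR 1; set q := p ij.1 ij.2 => h.
  have -> : q + (1 - q) * e = 1 + (1 - q) * (e - 1) by ring.
  by rewrite lerD2l.
rewrite prodr_const -expRM_natl ler_expR ler_wpM2r ?mulr_ge0 // ler_nat.
exact: card_upper.
Qed.

End PartA.
Arguments Bset {N}.
Arguments partA {R N p} hp Q D.

Local Close Scope ring_scope.

Section Graph.
Variable T : finType.
Variable e : rel T.

Lemma crossing (s : seq T) x p : path e x p -> x \in s -> last x p \notin s ->
  exists w z, [/\ w \in s, z \notin s & e w z].
Proof.
elim: p x => [|z p IH] x /=; first by move=> _ ->.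
move=> /andP[exz pz] xs lz.
have [zs|zs] := boolP (z \in s); first exact: IH pz zs lz.
by exists x, z.
Qed.

Lemma grow (x0 : T) k : (0 < k)%N -> (k <= #|[set y | connect e x0 y]|)%N ->
  exists s : seq T, exists ps : seq nat,
    [/\ size s = k /\ size ps = k, uniq s, nth x0 s 0 = x0,
        {subset s <= [set y | connect e x0 y]} &
        forall i, (0 < i < k)%N -> (nth 0%N ps i < i)%N /\
                  e (nth x0 s (nth 0%N ps i)) (nth x0 s i)].
Proof.
elim: k => [//|k IH] _ hk.
have [k0|kpos] := posnP k.
  subst k; exists [:: x0], [:: 0%N]; split => //.
    by move=> y; rewrite inE => /eqP ->; rewrite inE connect0.
  by move=> [|[|i]].
have [s [ps [[ss sps] us s0 sC sE]]] := IH kpos (ltnW hk).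
have [y yC ys] : exists2 y, y \in [set y | connect e x0 y] & y \notin s.
  apply/exists_inP; rewrite -negb_forall_in; apply/negP => /forall_inP hs.
  have : (#|[set y | connect e x0 y]| <= #|s|)%N.
    by apply: subset_leq_card; apply/fintype.subsetP => z /hs.
  by rewrite (card_uniqP us) ss leqNgt hk.
have x0s : x0 \in s by rewrite -s0 mem_nth // ss.
move: yC; rewrite inE => /connectP [q pq ly].
have lq : last x0 q \notin s by rewrite -ly.
have [w [z [ws zs ewz]]] := @crossing s x0 q pq x0s lq.
have zC : z \in [set y | connect e x0 y].
  rewrite inE; apply: connect_trans (connect1 ewz).
  by move: (sC _ ws); rewrite inE.
exists (rcons s z), (rcons ps (index w s)); split.
- by rewrite !size_rcons ss sps.
- by rewrite rcons_uniq zs us.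
- by rewrite nth_rcons ss kpos.
- by move=> u; rewrite mem_rcons in_cons => /orP[/eqP ->|/sC].
move=> i /andP[i0 ik].
have [ik'|ik'] := ltnP i k.
  have := sE i; rewrite i0 ik' => /(_ isT) [h1 h2].
  rewrite !nth_rcons ss ik' sps ik' (ltn_trans h1 ik'); split => //.
have ei : i = k by apply/eqP; rewrite eqn_leq ik'; rewrite ltnS in ik; rewrite ik.
subst i.
have wi : (index w s < k)%N by rewrite -ss index_mem.
rewrite !nth_rcons ss sps ltnn eqxx wi nth_index //.
Qed.

End Graph.


Section Enc.
Variable N : nat.

Definition upair (x y : 'I_N) : 'I_N * 'I_N := if (x <= y)%N then (x, y) else (y, x).

Lemma upair_upper x y : upair x y \in upper_pairs N.
Proof. by rewrite /upair inE; case: ifP => //= /negbT; rewrite -ltnNge => /ltnW. Qed.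

Lemma upair_eq x y x' y' : upair x y = upair x' y' -> (x = x' /\ y = y') \/ (x = y' /\ y = x').
Proof.
by rewrite /upair; case: ifP => _; case: ifP => _ [-> ->]; auto.
Qed.

Lemma upairB (L : label N) x y : symmetric_label L -> L (x, y) = lB -> L (upair x y) = lB.
Proof.
move=> /forallP sL h; rewrite /upair; case: ifP => // _.
by move/forallP: (sL y) => /(_ x) /eqP ->.
Qed.

Variable r : nat.
Definition Enc := ({ffun 'I_r -> 'I_N} * {ffun 'I_r -> 'I_r})%type.
Definition valid (en : Enc) :=
  injectiveb en.1 && [forall k : 'I_r, (0 < k)%N ==> (en.2 k < k)%N].
Definition Sedges (en : Enc) : {set 'I_N * 'I_N} :=
  [set upair (en.1 k) (en.1 (en.2 k)) | k in [set k : 'I_r | (0 < k)%N]].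

Lemma Sedges_sub en : Sedges en \subset upper_pairs N.
Proof. by apply/fintype.subsetP => ij /imsetP [k _ ->]; exact: upair_upper. Qed.

Lemma card_pos : #|[set k : 'I_r | (0 < k)%N]| = r.-1.
Proof.
case: r => [|r']; first by apply/eqP; rewrite -leqn0; apply: leq_trans (max_card _) _; rewrite card_ord.
have -> : [set k : 'I_r'.+1 | (0 < k)%N] = ~: [set ord0].
  by apply/setP => k; rewrite !inE lt0n.
by rewrite cardsC1 card_ord.
Qed.

Lemma card_Sedges en : valid en -> #|Sedges en| = r.-1.
Proof.
case: en => v par /andP[/= /injectiveP vi /forallP hp].
rewrite /Sedges card_in_imset ?card_pos // => k l; rewrite !inE => k0 l0 /upair_eq.
have hk := hp k; have hl := hp l; rewrite k0 l0 /= in hk hl.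
case=> [[/vi -> //]|[/vi e1 /vi e2]].
have h1 : (par l < par k)%N by rewrite e2.
have h2 : (par k < par l)%N by rewrite -e1.
by have := ltn_trans h1 h2; rewrite ltnn.
Qed.

Lemma witness (L : label N) (js : seq 'I_N) : symmetric_label L -> (0 < r)%N ->
  size js = r -> uniq js -> (forall a b, a \in js -> b \in js -> connected_idx L a b) ->
  exists en, valid en && [forall ij in Sedges en, L ij == lB].
Proof.
move=> sL r0 sj uj conn.
case: js sj uj conn => [|x0 js'] sj uj conn; first by rewrite -sj in r0.
have hC : (r <= #|[set y | connect (linked L) x0 y]|)%N.
  rewrite -sj -(card_uniqP uj); apply: subset_leq_card; apply/fintype.subsetP => a ha.
  by rewrite inE; apply: conn => //; rewrite mem_head.
have [s [ps [[ss sps] us s0 sC sE]]] := @grow _ (linked L) x0 r r0 hC.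
exists ([ffun k : 'I_r => nth x0 s k], [ffun k : 'I_r => insubd k (nth 0%N ps k)]).
apply/andP; split.
  apply/andP; split.
    apply/injectiveP => a b /=; rewrite !ffunE => /eqP; rewrite nth_uniq ?ss //.
    by move/eqP/val_inj.
  apply/forallP => k /=; apply/implyP => k0; rewrite ffunE val_insubd.
  have := sE k; rewrite k0 ltn_ord => /(_ isT) [h1 _].
  by rewrite (ltn_trans h1 (ltn_ord k)).
apply/forall_inP => ij /imsetP [k]; rewrite inE /= !ffunE => k0 ->.
have := sE k; rewrite k0 ltn_ord => /(_ isT) [h1 h2].
rewrite val_insubd (ltn_trans h1 (ltn_ord k)) in h2 *.
apply/eqP; apply: upairB => //.
by move/forallP: sL => /(_ (nth x0 s k)) /forallP /(_ (nth x0 s (nth 0%N ps k))) /eqP ->; apply/eqP.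
Qed.

End Enc.
Arguments upair {N}.
Arguments valid {N r}.
Arguments Sedges {N r}.
Arguments Sedges_sub {N r}.
Arguments card_Sedges {N r}.
Arguments witness {N r L js}.

Local Open Scope ring_scope.


Section PartB.
Variable R : realType.
Variable N : nat.
Variable p : 'I_N -> 'I_N -> R.
Hypothesis hp : forall i j, 0 <= p i j <= 1.

Definition fB r (L : label N) : R :=
  \sum_(en : Enc N r | valid en) \prod_(ij in Sedges en) (if L ij == lB then 1 else 0 : R).

Lemma fB_ge0 r L : 0 <= fB r L.
Proof. by rewrite sumr_ge0 // => en _; rewrite prodr_ge0 // => ij _; case: ifP. Qed.

Lemma fB_ge1 r L (js : seq 'I_N) : symmetric_label L -> (0 < r)%N ->
  size js = r -> uniq js -> (forall a b, a \in js -> b \in js -> connected_idx L a b) ->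
  1 <= fB r L.
Proof.
move=> sL r0 sj uj conn.
have [en /andP [ven /forall_inP hen]] := witness sL r0 sj uj conn.
rewrite /fB (bigD1 en) //= big1 ?lerDl; last by move=> ij /hen ->.
by rewrite sumr_ge0 // => en' _; rewrite prodr_ge0 // => ij _; case: ifP.
Qed.

Lemma card_Enc r : #|{: Enc N r}| = (N ^ r * r ^ r)%N.
Proof. by rewrite card_prod !card_ffun !card_ord. Qed.

Lemma partB r (Q : R) : 0 <= Q -> (forall i j, 1 - p i j <= Q) ->
  \sum_(L | symmetric_label L) wt p L * fB r L <= (N ^ r * r ^ r)%:R * Q ^+ r.-1.
Proof.
move=> Q0 hQ.
have -> : \sum_(L | symmetric_label L) wt p L * fB r L =
   \sum_(en : Enc N r | valid en) \sum_(L | symmetric_label L)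
      wt p L * \prod_(ij in Sedges en) (if L ij == lB then 1 else 0 : R).
  rewrite exchange_big /=; apply: eq_bigr => L _; by rewrite /fB mulr_sumr.
apply: (@le_trans _ _ (\sum_(en : Enc N r | valid en) Q ^+ r.-1)).
  apply: ler_sum => en ven.
  apply: le_trans (pattern_le hp _ (Sedges_sub en)) _.
  rewrite -(card_Sedges _ ven) -prodr_const; apply: ler_prod => ij _.
  by have /andP[_ h1] := hp ij.1 ij.2; rewrite subr_ge0 h1 hQ.
apply: (@le_trans _ _ (\sum_(en : Enc N r) Q ^+ r.-1)).
  rewrite [X in _ <= X](bigID valid) /= lerDl sumr_ge0 // => en _.
  by rewrite exprn_ge0.
by rewrite sumr_const card_Enc mulr_natl.
Qed.

End PartB.
Arguments fB {R N} r L.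
Arguments fB_ge0 {R N} r L.
Arguments fB_ge1 {R N r L js}.
Arguments partB {R N p} hp r Q.

Section MarkovWrap.
Local Open Scope classical_set_scope.

Lemma q_bound (R : realType) d (T : measurableType d) (P : probability T R)
  (N : nat) (eps C2 : R) (h : {RV P >-> R}) :
  (1 <= N)%N -> 0 < eps < 1 -> 0 < C2 ->
  ('E_P[fun w => (`|h w * Num.sqrt N%:R| `^ (2 + eps))%R] < C2%:E)%E ->
  0 <= p_entry P N eps h <= 1 /\
  1 - p_entry P N eps h <= C2 * (N%:R `^ (- (1 + eps / 5))).
Proof.
move=> N1 /andP[e0 e1] C0 hE.
have N0 : (0 < N%:R :> R) by rewrite ltr0n.
have N1' : (1 <= N%:R :> R) by rewrite ler1n.
set a := N%:R `^ (- (eps / 10)).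
have a0 : 0 < a by rewrite powR_gt0.
set A := [set w | `|h w| < a].
have mh : measurable_fun setT (h : T -> R) by exact: measurable_funPT.
have mA : measurable A.
  have mn : measurable_fun setT (fun w => `|h w|).
    exact: (measurableT_comp (@normr_measurable R setT) mh).
  have mf : measurable_fun setT (fun w => `|h w| < a).
    exact: (measurable_fun_ltr mn (measurable_cst a)).
  have m1 : measurable [set true] by [].
  have := mf measurableT [set true] m1.
  by rewrite setTI; congr measurable; apply/seteqP; split => w /=.
have PA0 : (0 <= P A)%E by exact: measure_ge0.
have PA1 : (P A <= 1)%E by exact: probability_le1.
have fA : P A \is a fin_num by rewrite ge0_fin_numE // (le_lt_trans PA1) // ltry.
have pE : p_entry P N eps h = fine (P A) by [].
rewrite pE; split.
  rewrite fine_ge0 //=; by have := @fine_le _ (P A) 1%E fA isT PA1.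
set s := Num.sqrt (N%:R : R).
have s0 : 0 <= s by exact: sqrtr_ge0.
pose f := fun x : R => (x * s) `^ (2 + eps).
have mfm : measurable_fun setT f.
  exact: (measurableT_comp (measurable_powR (2 + eps)) (@mulrr_measurable R setT s)).
have f0 : forall r, 0 <= r -> 0 <= f r by move=> r _; exact: powR_ge0.
have fmono : {in Num.nneg &, {homo f : x y / x <= y}}.
  move=> x y; rewrite !nnegrE => x0 y0 xy; rewrite /f.
  apply: (ge0_ler_powR _); rewrite ?nnegrE ?mulr_ge0 ?ler_wpM2r //.
  by apply: addr_ge0 => //; apply: ltW.
have := @markov _ _ _ P h f a a0 mfm f0 fmono.
have -> : [set x | (a%:E <= `|(h x)%:E|)%E] = ~` A.
  by apply/seteqP; split => w /=; rewrite lee_fin /A /= leNgt => /negP.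
rewrite probability_setC // -(fineK fA) -EFinB -EFinM.
have -> : (f \o (fun x => `|x|) \o h) = (fun w => `|h w * s| `^ (2 + eps)).
  by apply/funext => w /=; rewrite /f normrM (ger0_norm s0).
move=> H; have := le_lt_trans H hE; rewrite lte_fin => H2.
set q := 1 - fine (P A) in H2 *.
have fa0 : 0 < f a.
  by rewrite /f powR_gt0 // mulr_gt0 // sqrtr_gt0.
have H3 : q < C2 / f a by rewrite ltr_pdivlMr // mulrC.
apply: (le_trans (ltW H3)); rewrite ler_pM2l //.
have -> : f a = N%:R `^ ((2^-1 - eps / 10) * (2 + eps)).
  have hN0 : (N%:R != 0 :> R) by rewrite gt_eqF.
  rewrite /f /s /a -powR12_sqrt ?ler0n // -powRD ?hN0 ?implybT //.
  by rewrite powRrM addrC.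
rewrite -powRN; apply: ler_powR => //.
rewrite lerN2.
nra.
Qed.

End MarkovWrap.


Section Asym.
Variable R : realType.

Lemma expR_half (z : R) : expR z / 2 = expR (z - ln 2).
Proof. by rewrite expRD expRN lnK // posrE. Qed.

Lemma ln2_le2 : ln (2 : R) <= 2.
Proof. by apply: ltW; apply: ln_sublinear. Qed.

Lemma asymA (d K x y : R) : 0 < d < 1 -> 0 < K -> 16 * K / (3 * d) <= x -> 200 <= x ->
  y <= x ->
  expR (K * expR ((1 - d) * x) - expR ((1 - d / 4) * x) / 2) <= expR (- (d / 4) * x * y) / 2.
Proof.
move=> /andP[d0 d1] K0 hx1 hx2 yx.
rewrite [X in _ <= X]expR_half ler_expR.
set u := expR ((1 - d) * x).
have u0 : 0 < u by exact: expR_gt0.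
have -> : expR ((1 - d / 4) * x) = u * expR (3 * d / 4 * x).
  by rewrite /u -expRD; congr expR; field.
have h1 : 4 * K <= expR (3 * d / 4 * x).
  apply: le_trans (expR_ge1Dx _).
  have : 16 * K <= x * (3 * d) by rewrite -ler_pdivrMr ?mulr_gt0.
  nra.
have h2 : K * u <= u * expR (3 * d / 4 * x) / 4.
  move: h1; set E := expR _ => h1; nra.
have h3 : expR (x / 2) <= u * expR (3 * d / 4 * x).
  rewrite /u -expRD ler_expR; nra.
have h4 : 1 + (x / 2) ^+ 3 / 6 <= expR (x / 2).
  have := @expR_ge1Dxn R (x / 2) 2; rewrite (_ : (3`!)%:R = 6 :> R) //.
  by apply; lra.
have h5 := ln2_le2.
have hxy : d / 4 * x * y <= x * x.
  have x0 : 0 <= x by lra.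
  have : d / 4 * y <= x by nra.
  nra.
have : x * x + 2 <= (1 + (x / 2) ^+ 3 / 6) / 4.
  have : (x / 2) ^+ 3 = x * x * x / 8 by rewrite !exprS expr0; field.
  move=> ->; nra.
lra.
Qed.


Lemma ln_le_sub1 (z : R) : 0 < z -> ln z <= z - 1.
Proof.
move=> z0; rewrite -ler_expR lnK ?posrE //.
by apply: le_trans (expR_ge1Dx _); rewrite addrC subrK.
Qed.

Lemma asymB (d C2 x y : R) (r : nat) : 0 < d < 1 -> 1 < C2 -> 2 * ln C2 / d <= x ->
  48 / d + 4 <= y -> expR y = x -> y <= r%:R < y + 1 ->
  (expR x) ^+ r * (r%:R) ^+ r * (C2 * expR (- (1 + d) * x)) ^+ r.-1
  <= expR (- (d / 4) * x * y) / 2.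
Proof.
move=> /andP[d0 d1] C21 hx hy exy /andP[yr ry].
have y1 : 1 <= y.
  have : 0 < 48 / d by rewrite divr_gt0.
  lra.
case: r yr ry => [|n] yr ry; first by move: yr; rewrite /=; lra.
have r0 : 0 < (n.+1)%:R :> R by rewrite ltr0n.
have e1 : (n.+1)%:R ^+ n.+1 = expR ((n.+1)%:R * ln (n.+1)%:R) :> R.
  by rewrite expRM_natl lnK.
have e2 : (C2 * expR (- (1 + d) * x)) ^+ n = expR (n%:R * (ln C2 + - (1 + d) * x)).
  by rewrite expRM_natl expRD lnK // posrE; lra.
have e3 : expR x ^+ n.+1 = expR ((n.+1)%:R * x) by rewrite expRM_natl.
rewrite /= e1 e2 e3 -!expRD [X in _ <= X]expR_half ler_expR.
have lC : 0 < ln C2 by apply: ln_gt0.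
have lr0 : 0 <= ln (n.+1)%:R :> R by apply: ln_ge0; rewrite ler1n.
have lr1 : ln (n.+1)%:R <= n%:R :> R.
  by apply: le_trans (@ln_le_sub1 _ r0) _; rewrite -natr1 addrK.
have hn : (n.+1)%:R = n%:R + 1 :> R by rewrite -natr1.
set L2 := ln (n.+1)%:R in lr0 lr1 *.
rewrite hn in yr ry *.
have x1 : 1 + y ^+ 2 / 2 <= x.
  rewrite -exy; have := @expR_ge1Dxn R y 1; rewrite (_ : (2`!)%:R = 2 :> R) //.
  by apply; lra.
have x0 : 0 <= x.
  have : 0 <= y ^+ 2 / 2 by rewrite divr_ge0 // sqr_ge0.
  lra.
have dn0 : d != 0 by rewrite gt_eqF.
have hdx : 2 * ln C2 <= d * x.
  have -> : 2 * ln C2 = d * (2 * ln C2 / d) by field.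
  by rewrite ler_wpM2l // ltW.
have hdy : 48 + 4 * d <= d * y.
  have -> : 48 + 4 * d = d * (48 / d + 4) by field.
  by rewrite ler_wpM2l // ltW.
have hl2 := @ln2_le2.
have hA1 : (n%:R + 1) * L2 <= (n%:R + 1) * n%:R :> R.
  by rewrite ler_wpM2l // addr_ge0.
have hA2 : (n%:R + 1) * n%:R <= (y + 1) * y :> R.
  have n0 : 0 <= n%:R :> R by [].
  nra.
have hA : (n%:R + 1) * L2 <= (y + 1) * y :> R by lra.
have hB : n%:R * (ln C2 - d * x) <= (y - 1) * (- (d * x) / 2) :> R by nra.
have hC : (48 + 4 * d) * x <= d * x * y by nra.
have hy2 : y <= y ^+ 2 by rewrite expr2; nra.
lra.
Qed.

End Asym.


Lemma dev_le N (L : label N) : symmetric_label L ->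
  (#|deviant L| <= 2 * #|Bset L|)%N.
Proof.
move=> sL.
have sub : deviant L \subset (fst @: Bset L) :|: (snd @: Bset L).
  apply/fintype.subsetP => i; rewrite inE => /existsP [j hij].
  have hB : upair i j \in Bset L.
    rewrite inE upair_upper /=; apply/eqP; apply: upairB => //; exact/eqP.
  rewrite inE; rewrite /upair in hB; move: hB; case: ifP => _ hB.
    by apply/orP; left; apply/imsetP; exists (i, j).
  by apply/orP; right; apply/imsetP; exists (j, i).
apply: leq_trans (subset_leq_card sub) _.
apply: leq_trans (leq_card_setU _ _) _.
by rewrite mul2n -addnn leq_add // leq_imset_card.
Qed.

Lemma powR_expR (R : realType) (a z : R) : 0 < a -> a `^ z = expR (z * ln a).
Proof. by move=> a0; rewrite /powR gt_eqF. Qed.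

Theorem lemma3p11 (R : realType) (eps C2 : R) :
  0 < eps < 1 -> 1 < C2 ->
  exists c C : R, 0 < c /\ 0 < C /\
  forall (c1 C1 : R), 0 < c1 < 1 -> 1 < C1 ->
  forall (N : nat), (1 <= N)%N ->
  forall (d : measure_display) (T : measurableType d) (P : probability T R)
         (h : 'I_N -> 'I_N -> {RV P >-> R}),
  generalized_Wigner P h eps c1 C1 C2 ->
  label_prob (fun i j => p_entry P N eps (h i j)) (inadmissible eps)
    < C * N%:R `^ (- c * ln (ln (N%:R : R))).
Proof.
move=> /andP[e0 e1] C21.
set dd := eps / 5.
have dd0 : 0 < dd by rewrite divr_gt0.
have dd1 : dd < 1 by rewrite /dd; lra.
set c := dd / 4.
have c0 : 0 < c by rewrite divr_gt0.
set K := C2 * (expR 1 - 1).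
have K0 : 0 < K.
  apply: mulr_gt0; first lra.
  by rewrite subr_gt0 -[X in X < _]expR0 ltr_expR.
set Y0 := 48 / dd + 4.
have lC : 0 < ln C2 by apply: ln_gt0.
set X1 := expR Y0 + 2 * ln C2 / dd + 16 * K / (3 * dd) + 200.
have f1 : 0 < 2 * ln C2 / dd by apply: divr_gt0 => //; apply: mulr_gt0.
have f2 : 0 < 16 * K / (3 * dd) by apply: divr_gt0; apply: mulr_gt0.
have f3 : 0 < expR Y0 by apply: expR_gt0.
have hX1a : expR Y0 <= X1 by rewrite /X1; lra.
have hX1b : 2 * ln C2 / dd <= X1 by rewrite /X1; lra.
have hX1c : 16 * K / (3 * dd) <= X1 by rewrite /X1; lra.
have hX1d : 200 <= X1 by rewrite /X1; lra.
set C := 2 * expR (c * X1 * X1).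
have C2le : 2 <= C.
  rewrite /C -[X in X <= _]mulr1 ler_wpM2l // -expR0 ler_expR.
  by rewrite !mulr_ge0 // ?ltW //; lra.
exists c, C; split => //; split; first lra.
move=> c1 C1 _ _ N N1 d T P h HW.
have [_ [_ [_ [_ [_ hA3]]]]] := HW.
set p := fun i j => p_entry P N eps (h i j).
have C20 : 0 < C2 by lra.
have he : 0 < eps < 1 by rewrite e0 e1.
have hq i j := @q_bound R d T P N eps C2 (h i j) N1 he C20 (hA3 i j).
have hp : forall i j, 0 <= p i j <= 1 by move=> i j; have [] := hq i j.
have N0 : 0 < N%:R :> R by rewrite ltr0n.
set x := ln (N%:R : R).
have Nx : N%:R = expR x by rewrite lnK.
have x0 : 0 <= x by apply: ln_ge0; rewrite ler1n.
rewrite powR_expR //.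
set y := ln x.
have [xs|xl] := ltP x X1.
  apply: le_lt_trans (label_prob_le1 hp _) _.
  have hyx : y * x <= X1 * X1.
    have [->|xpos] := eqVneq x 0; first by rewrite mulr0 mulr_ge0 //; lra.
    have xpos' : 0 < x by rewrite lt_neqAle eq_sym xpos x0.
    have := ln_sublinear xpos'; rewrite -/y => yx.
    nra.
  rewrite /C -mulrA -expRD.
  have : 1 <= expR (c * X1 * X1 + - c * y * x).
    rewrite -expR0 ler_expR.
    have : c * (y * x) <= c * (X1 * X1) by rewrite ler_wpM2l // ltW.
    lra.
  lra.
have xpos : 0 < x by lra.
have ey : expR y = x by rewrite /y lnK // posrE.
have yY : Y0 <= y.
  by rewrite -(expRK Y0) /y ler_ln ?posrE //; lra.
have yx : y <= x by apply: ltW; apply: ln_sublinear.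
have y1 : 1 <= y.
  have : 0 < 48 / dd by rewrite divr_gt0.
  rewrite /Y0 in yY; lra.
set r := r_of (R := R) N.
have cy : (0 < Num.ceil y)%Z by rewrite ceil_gt0; lra.
have hr : r%:R = (Num.ceil y)%:~R :> R.
  rewrite /r /r_of -/x -/y max_r ?ltW // natr_absz ger0_norm //; exact: ltW.
have ry : y <= r%:R < y + 1.
  rewrite hr ceil_ge /=; have := ceilB1_lt y; rewrite intrD /=; lra.
have r0 : (0 < r)%N by rewrite -(ltr0n R); lra.
set D := N%:R `^ (1 - eps / 20) / 2.
set Q := C2 * N%:R `^ (- (1 + dd)).
have Q0 : 0 <= Q by rewrite mulr_ge0 ?powR_ge0 //; lra.
have hQ : forall i j, 1 - p i j <= Q by move=> i j; have [] := hq i j.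
have H1 := union_le hp (inadmissible eps)
   (fun L => expR ((#|Bset L|)%:R - D) + fB r L)
   (fun L => addr_ge0 (expR_ge0 _) (fB_ge0 r L)).
have H1' : label_prob p (inadmissible eps) <=
   \sum_(L | symmetric_label L) wt p L * (expR ((#|Bset L|)%:R - D) + fB r L).
  apply: H1 => L sL [hdev|[js [sj uj cj]]] /=.
    have hB : D <= (#|Bset L|)%:R.
      have := dev_le _ _ sL; rewrite -(ler_nat R) natrM => hd.
      rewrite /D; lra.
    have : 1 <= expR ((#|Bset L|)%:R - D) by rewrite -[X in X <= _]expR0 ler_expR subr_ge0.
    have := @fB_ge0 R N r L; lra.
  have := @fB_ge1 R N r L js sL r0 sj uj cj.
  have := expR_ge0 ((#|Bset L|)%:R - D); lra.
move: H1'; under eq_bigr do rewrite mulrDr; rewrite big_split /= => H2.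
have HA := partA hp Q D Q0 hQ.
have HB := partB hp r Q Q0 hQ.
have eA : (N ^ 2)%:R * (Q * (expR 1 - 1)) = K * expR ((1 - dd) * x).
  rewrite /Q /K powR_expR // natrX Nx expRK -expRM_natl.
  have e : expR (2%:R * x) * expR (- (1 + dd) * x) = expR ((1 - dd) * x).
    by rewrite -expRD; congr expR; ring.
  rewrite -e; ring.
have eD : D = expR ((1 - dd / 4) * x) / 2.
  by rewrite /D powR_expR // -/x; congr (expR _ / _); rewrite /dd; field.
have eB : (N ^ r * r ^ r)%:R * Q ^+ r.-1 =
    (expR x) ^+ r * (r%:R) ^+ r * (C2 * expR (- (1 + dd) * x)) ^+ r.-1.
  by rewrite natrM !natrX Nx /Q powR_expR.
rewrite eB in HB.
have HA' := @asymA R dd K x y (introT andP (conj dd0 dd1)) K0 (le_trans hX1c xl) (le_trans hX1d xl) yx.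
have HB' := @asymB R dd C2 x y r (introT andP (conj dd0 dd1)) C21 (le_trans hX1b xl) yY ey ry.
have E : expR (- (dd / 4) * x * y) = expR ((- c * y) * x) by congr expR; rewrite /c; ring.
have Epos := expR_gt0 ((- c * y) * x).
rewrite E in HA' HB'.
rewrite -eD -eA in HA'.
apply: le_lt_trans H2 _.
apply: (@le_lt_trans _ _ (expR (- c * y * x))).
  rewrite [X in _ <= X]splitr; apply: lerD.
    exact: le_trans HA HA'.
  exact: le_trans HB HB'.
rewrite -[X in X < _]mul1r ltr_pM2r //.
by apply: lt_le_trans C2le; rewrite ltr1n.
Qed.
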